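(* Let $S\subset\mathbb{R}^p$ be a compact set with $\mathrm{cl}(\mathrm{int}(S))=S$ and let $\mu_S$ be the uniform probability measure on $S$. Let $\mathbf{x}\notin S$ and let $\delta$ be such that $\mathrm{dist}(\mathbf{x},S)\ge\delta$. Then for every positive integer $d$, \[s(d)\,\Lambda_{\mu_S,d}(\mathbf{x})\le 2^{3-\frac{\delta d}{\delta+\mathrm{diam}(S)}}\,d^p\left(\frac{e}{p}\right)^p\exp\left(\frac{p^2}{d}\right).\]
   Context: $\mu_S=\lambda_S/\lambda(S)$ where $\lambda_S$ is the restriction of Lebesgue measure to $S$; $\mathrm{diam}(S)$ is the diameter of $S$; $s(d)=\binom{p+d}{d}$. For a finite Borel measure $\nu$ with finite moments, $\Lambda_{\nu,d}(\xi)=\min\{\int P^2\,d\nu: P\in\mathbb{R}[X]_d,\ P(\xi)=1\}$, where $\mathbb{R}[X]_d$ is the space of real polynomials in $p$ variables of total degree at most $d$. *)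

(* Defs.v *)
From HB Require Import structures.
From mathcomp Require Import all_boot all_order all_algebra.
From mathcomp Require Import all_classical all_reals all_analysis.
From mathcomp Require mpoly.
Set Implicit Arguments. Unset Strict Implicit. Unset Printing Implicit Defensive.
Import Order.TTheory GRing.Theory Num.Theory.
Import numFieldNormedType.Exports.
Local Open Scope classical_set_scope.
Local Open Scope ring_scope.

Section Defs.
Variable R : realType.

(* Iterated Lebesgue integral over R^n (coordinates as an n-tuple).
   For nonnegative Borel functions this is the integral w.r.t. the
   n-dimensional Lebesgue measure (Tonelli). *)
Fixpoint iter_lebesgue (n : nat) : (n.-tuple R -> \bar R) -> \bar R :=
  match n return (n.-tuple R -> \bar R) -> \bar R with
  | 0 => fun f => f [tuple]
  | n'.+1 => fun f =>
      (\int[@lebesgue_measure R]_x iter_lebesgue (fun t : n'.-tuple R => f [tuple of x :: t]))%E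
  end.

Definition lebesgue_int (p : nat) (f : 'rV[R]_p -> \bar R) : \bar R :=
  iter_lebesgue (fun t : p.-tuple R => f (\row_i tnth t i)).

Definition leb_vol (p : nat) (S : set 'rV[R]_p) : \bar R :=
  lebesgue_int (fun x => (\1_S x)%:E).

Definition eucl_dist (p : nat) (x y : 'rV[R]_p) : R :=
  Num.sqrt (\sum_(i < p) (x ord0 i - y ord0 i) ^+ 2).

Definition diam (p : nat) (S : set 'rV[R]_p) : R :=
  sup [set eucl_dist x y | x in S & y in S].

Definition dist_set (p : nat) (x : 'rV[R]_p) (S : set 'rV[R]_p) : R :=
  inf [set eucl_dist x y | y in S].

Definition peval (p : nat) (P : mpoly.mpoly p R) (x : 'rV[R]_p) : R :=
  mpoly.meval (fun i => x ord0 i) P.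

Definition deg_le (p : nat) (d : nat) (P : mpoly.mpoly p R) : bool :=
  (\max_(m <- mpoly.msupp P) (mpoly.mdeg m).+1 <= d.+1)%N.

(* int P^2 d mu_S, mu_S = lambda_S / lambda(S) *)
Definition int_sq_unif (p : nat) (S : set 'rV[R]_p) (P : mpoly.mpoly p R) : \bar R :=
  (lebesgue_int (fun x => (\1_S x * (peval P x) ^+ 2)%:E)
     * ((fine (leb_vol S))^-1)%:E)%E.

Definition christoffel_unif (p : nat) (S : set 'rV[R]_p) (d : nat) (xi : 'rV[R]_p) : \bar R :=
  ereal_inf [set int_sq_unif S P | P in [set P : mpoly.mpoly p R | deg_le d P /\ peval P xi = 1]].

Definition sdim (p d : nat) : nat := 'C(p + d, d).

End Defs.

(* Main.v *)
Require Import Defs.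
From HB Require Import structures.
From mathcomp Require Import all_boot all_order all_algebra.
From mathcomp Require Import all_classical all_reals all_analysis.
From mathcomp Require Import ring lra zify.
From mathcomp Require mpoly.
Import Order.TTheory GRing.Theory Num.Theory.
Import numFieldNormedType.Exports.
Local Open Scope classical_set_scope.
Local Open Scope ring_scope.

Section IntLemmas.
Local Open Scope ereal_scope.
Context {R : realType}.
Import HBNNSimple.

Lemma int_mono (f g : R -> \bar R) : (forall x, 0 <= f x) -> (forall x, f x <= g x) ->
  \int[@lebesgue_measure R]_x f x <= \int[@lebesgue_measure R]_x g x.
Proof.
move=> f0 fg.
rewrite !ge0_integralE//; last by move=> x _; exact: le_trans (f0 x) (fg x).
apply: ereal_sup_le => _ [h hf <-]; exists h => //= x.
apply: le_trans (hf x) _.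
by rewrite !patch_setT.
Qed.

Lemma int_scale (c : R) (f : R -> \bar R) : (0 <= c)%R -> (forall x, 0 <= f x) ->
  \int[@lebesgue_measure R]_x (c%:E * f x) <= c%:E * \int[@lebesgue_measure R]_x f x.
Proof.
move=> c0 f0.
have [->|cpos] := eqVneq c 0%R.
  under eq_integral do rewrite mul0e.
  by rewrite integral0 mul0e.
have cgt0 : (0 < c)%R by rewrite lt_def cpos c0.
rewrite !ge0_integralE//; last by move=> x _; rewrite mule_ge0.
apply: ge_ereal_sup => _ [h hcf <-].
have ic0 : (0 <= c^-1)%R by rewrite invr_ge0.
pose h' := scale_nnsfun h ic0.
have -> : sintegral (@lebesgue_measure R) h = c%:E * sintegral (@lebesgue_measure R) h'.
  rewrite -sintegralrM; apply: eq_sintegral => x /=.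
  by rewrite mulrA divff ?mul1r.
rewrite lee_pmul2l ?lte_fin//.
apply: ereal_sup_ubound; exists h' => //= x.
rewrite patch_setT /h' /=.
have := hcf x; rewrite patch_setT /= => hx.
rewrite -(@lee_pmul2l _ c%:E) ?lte_fin// -EFinM mulrA divff ?mul1r//.
Qed.

End IntLemmas.

Section IterLemmas.
Local Open Scope ereal_scope.
Context {R : realType}.

Lemma iter_ge0 n (f : n.-tuple R -> \bar R) : (forall t, 0 <= f t) -> 0 <= iter_lebesgue f.
Proof.
elim: n f => [|n IH] f f0 /=; first exact: f0.
by apply: integral_ge0 => x _; apply: IH.
Qed.

Lemma iter_mono n (f g : n.-tuple R -> \bar R) : (forall t, 0 <= f t) ->
  (forall t, f t <= g t) -> iter_lebesgue f <= iter_lebesgue g.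
Proof.
elim: n f g => [|n IH] f g f0 fg /=; first exact: fg.
apply: int_mono => x; first by apply: iter_ge0.
by apply: IH.
Qed.

Lemma iter_scale n (c : R) (f : n.-tuple R -> \bar R) : (0 <= c)%R -> (forall t, 0 <= f t) ->
  iter_lebesgue (fun t => c%:E * f t) <= c%:E * iter_lebesgue f.
Proof.
elim: n f => [|n IH] f c0 f0 /=; first by [].
apply: (le_trans _ (int_scale _ _ c0 _)); last by move=> x; apply: iter_ge0.
apply: int_mono => x; first by apply: iter_ge0 => t; rewrite mule_ge0.
by apply: IH.
Qed.

End IterLemmas.

Lemma int_sq_bound (R : realType) (p : nat) (S : set 'rV[R]_p) (P : mpoly.mpoly p R) (c : R) :
  0 <= c -> (forall y, S y -> (peval P y) ^+ 2 <= c) -> (int_sq_unif S P <= c%:E)%E.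
Proof.
move=> c0 hP.
rewrite /int_sq_unif /leb_vol /lebesgue_int.
set V := iter_lebesgue (fun t : p.-tuple R => (\1_S (\row_i tnth t i))%:E).
have L1 : (iter_lebesgue (fun t : p.-tuple R =>
     (\1_S (\row_i tnth t i) * peval P (\row_i tnth t i) ^+ 2)%:E) <= c%:E * V)%E.
  apply: (le_trans _ (iter_scale _ _ _ c0 _)); last by move=> t; rewrite lee_fin indicE.
  apply: iter_mono => t; first by rewrite lee_fin indicE mulr_ge0// sqr_ge0.
  rewrite -EFinM lee_fin !indicE.
  case: (boolP (_ \in S)) => [/[dup] hS /set_mem/hP|_]; last by rewrite !mul0r mulr0.
  by rewrite !mul1r mulr1.
have V0 : (0 <= V)%E by apply: iter_ge0 => t; rewrite lee_fin indicE.
move: L1 V0; case: V => [r| |] // L1 V0.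
- rewrite /=; have [->|r0] := eqVneq r 0%R; first by rewrite invr0 mule0 lee_fin.
  have rpos : (0 < r)%R by rewrite lt_def r0 -lee_fin V0.
  rewrite -(@lee_pmul2r _ r%:E) ?lte_fin// -muleA -EFinM mulVf// mule1.
  by [].
- by rewrite /= invr0 mule0 lee_fin.
Qed.

Lemma ffact_le_exp (n m : nat) : (n ^_ m <= n ^ m)%N.
Proof.
elim: m n => [|m IH] n; first by [].
rewrite ffactnS expnS leq_mul2l; apply/orP; right.
apply: leq_trans (IH _) _.
by case: m {IH} => [|m]; rewrite ?expn0 ?leq_exp2r ?leq_pred.
Qed.

Lemma pow_succ_le (R : realType) (k : nat) : k.+1%:R ^+ k <= k%:R ^+ k * expR 1 :> R.
Proof.
have [->|kpos] := eqVneq k 0%N; first by rewrite !expr0 mul1r; apply: le_trans (expR_ge1Dx 1); rewrite lerDl.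
have kk : (0 < k%:R :> R) by rewrite ltr0n lt0n.
have h1 : k.+1%:R <= k%:R * expR (k%:R^-1) :> R.
  have h := expR_ge1Dx (k%:R^-1 : R).
  rewrite -(ler_pM2l kk) mulrDr mulr1 mulfV ?gt_eqF// in h.
  by rewrite -natr1.
apply: le_trans (lerXn2r k _ _ h1) _; rewrite ?nnegrE ?ler0n ?mulr_ge0 ?ler0n ?expR_ge0//.
by rewrite exprMn -expRM_natl mulfV ?gt_eqF.
Qed.

Lemma fact_lb (R : realType) (k : nat) : (k%:R / expR 1) ^+ k <= k`!%:R :> R.
Proof.
elim: k => [|k IH]; first by rewrite expr0 fact0.
rewrite factS natrM exprS.
have e0 : 0 < expR 1 :> R by apply: expR_gt0.
rewrite expr_div_n in IH *.
have H := pow_succ_le R k.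
rewrite -ler_pdivlMr ?exprn_gt0// in IH.
have hX : k.+1%:R ^+ k <= k`!%:R * expR 1 ^+ k.+1 :> R.
  apply: le_trans H _; rewrite exprS mulrCA mulrC. rewrite ler_pM2l//.
  by rewrite invrK in IH.
rewrite -mulrA; apply: ler_wpM2l; first by rewrite ler0n.
rewrite expr_div_n mulrCA -invfM -exprS ler_pdivrMr ?exprn_gt0//.
Qed.

Lemma sdim_bound (R : realType) (p d : nat) : (0 < d)%N ->
  ('C(p + d, d))%:R <= d%:R ^+ p * (expR 1 / p%:R) ^+ p * expR (p%:R ^+ 2 / d%:R) :> R.
Proof.
move=> d0.
have dR : 0 < d%:R :> R by rewrite ltr0n.
have e0 : 0 < expR 1 :> R by apply: expR_gt0.
have hC : ('C(p + d, d) * p`! <= (p + d) ^ p)%N.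
  have -> : 'C(p + d, d) = 'C(p + d, p) by rewrite -bin_sub ?leq_addl// addnK.
  rewrite bin_ffact; exact: ffact_le_exp.
have hpd : (p + d)%:R <= d%:R * expR (p%:R / d%:R) :> R.
  have h := expR_ge1Dx (p%:R / d%:R : R).
  rewrite -(ler_pM2l dR) mulrDr mulr1 mulrCA mulfV ?gt_eqF// mulr1 in h.
  by rewrite natrD addrC.
have hpd2 : (p + d)%:R ^+ p <= d%:R ^+ p * expR (p%:R ^+ 2 / d%:R) :> R.
  apply: le_trans (lerXn2r p _ _ hpd) _; rewrite ?nnegrE ?ler0n ?mulr_ge0 ?ler0n ?expR_ge0//.
  by rewrite exprMn -expRM_natl expr2 mulrA.
have hf := fact_lb R p.
have fpos : 0 < p`!%:R :> R by rewrite ltr0n fact_gt0.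
have hC' : ('C(p + d, d))%:R <= (p + d)%:R ^+ p / p`!%:R :> R.
  by rewrite ler_pdivlMr// -natrM -natrX ler_nat.
apply: le_trans hC' _.
rewrite mulrAC; apply: ler_pM; rewrite ?mulr_ge0 ?invr_ge0 ?ler0n ?exprn_ge0 ?expR_ge0//.
have [->|pp] := eqVneq p 0%N; first by rewrite !expr0 fact0 invr1.
have pR : 0 < p%:R :> R by rewrite ltr0n lt0n.
rewrite -(invf_div (p%:R)) exprVn lef_pV2 ?posrE ?exprn_gt0 ?divr_gt0//.
Qed.

Fixpoint cheb {A : pzRingType} (l l2 : A) (j : nat) : A * A :=
  match j with
  | 0 => (l, 1)
  | j'.+1 => ((l * (cheb l l2 j').1 + l2 * (cheb l l2 j').2),
              ((cheb l l2 j').1 + l * (cheb l l2 j').2))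
  end.

Section MP.
Import -(notations) mpoly.
Variables (R : realType) (p : nat).
Local Notation MP := (mpoly.mpoly p R).
Local Notation msz q := (msize q).

Lemma msizeM2 (q r : MP) a b : (msz q <= a.+1)%N -> (msz r <= b.+1)%N -> (msz (q * r) <= (a + b).+1)%N.
Proof.
have [->|qn] := eqVneq q 0; first by rewrite mul0r mpoly.msize0.
have [->|rn] := eqVneq r 0; first by rewrite mulr0 mpoly.msize0.
rewrite mpoly.msizeM_proper ?mulf_neq0 ?mpoly.mleadc_eq0 //.
lia.
Qed.

Arguments msizeM2 {q r a b}.

Lemma msizeD2 (q r : MP) a : (msz q <= a)%N -> (msz r <= a)%N -> (msz (q + r) <= a)%N.
Proof.
move=> h1 h2; apply: leq_trans (mpoly.msizeD_le _ _) _.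
by rewrite geq_max h1 h2.
Qed.

Lemma msizeB2 (q r : MP) a : (msz q <= a)%N -> (msz r <= a)%N -> (msz (q - r) <= a)%N.
Proof. by move=> h1 h2; apply: msizeD2 => //; rewrite mpoly.msizeN. Qed.

Lemma msize_cheb (l l2 : MP) j : (msz l <= 3)%N -> (msz l2 <= 5)%N ->
  (msz (cheb l l2 j).1 <= (2 * j + 2).+1)%N /\ (msz (cheb l l2 j).2 <= (2 * j).+1)%N.
Proof.
move=> hl hl2; elim: j => [|j [IH1 IH2]] /=.
  by rewrite mpoly.msize1; split.
split.
  apply: msizeD2.
    by apply: (leq_trans (msizeM2 hl IH1)); lia.
  by apply: (leq_trans (msizeM2 hl2 IH2)); lia.
apply: msizeD2.
  by apply: (leq_trans IH1); lia.
by apply: (leq_trans (msizeM2 hl IH2)); lia.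
Qed.

Lemma meval_cheb (v : 'I_p -> R) (l l2 : MP) j :
  mpoly.meval v (cheb l l2 j).1 = (cheb (mpoly.meval v l) (mpoly.meval v l2) j).1 /\
  mpoly.meval v (cheb l l2 j).2 = (cheb (mpoly.meval v l) (mpoly.meval v l2) j).2.
Proof.
elim: j => [|j [IH1 IH2]] /=; first by rewrite mpoly.meval1.
by rewrite !mpoly.mevalD !mpoly.mevalM IH1 IH2.
Qed.

Definition Qpoly (x : 'rV[R]_p) : MP :=
  \sum_(i < p) (mpoly.mpolyX R (mpoly.mnm1 i) - mpoly.mpolyC p (x ord0 i)) ^+ 2.

Lemma msize_Q x : (msz (Qpoly x) <= 3)%N.
Proof.
apply: leq_trans (mpoly.msize_sum _ _ _) _.
apply/bigmax_leqP => i _.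
rewrite expr2; apply: (@msizeM2 _ _ 1 1); apply: msizeB2;
  rewrite ?mpoly.msizeX ?mpoly.mdeg1 ?mpoly.msizeC//; by case: (_ != 0).
Qed.

Lemma meval_Q x (y : 'rV[R]_p) :
  mpoly.meval (fun i => y ord0 i) (Qpoly x) = \sum_(i < p) (y ord0 i - x ord0 i) ^+ 2.
Proof.
rewrite /Qpoly rmorph_sum; apply: eq_bigr => i _.
by rewrite rmorphXn rmorphB /= mpoly.mevalXU mpoly.mevalC.
Qed.

End MP.
Arguments Qpoly {R p}.
Arguments msize_Q {R p}.
Arguments meval_Q {R p}.
Arguments meval_cheb {R p}.
Arguments msize_cheb {R p}.
Arguments msizeM2 {R p q r a b}.
Arguments msizeD2 {R p}.
Arguments msizeB2 {R p}.

Lemma cheb_pell (R : realType) (z : R) j :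
  (cheb z (z ^+ 2 - 1) j).1 ^+ 2 - (z ^+ 2 - 1) * (cheb z (z ^+ 2 - 1) j).2 ^+ 2 = 1.
Proof.
elim: j => [|j IH] /=; first by rewrite expr1n mulr1; ring.
move: IH; set t := (cheb _ _ j).1; set u := (cheb _ _ j).2 => IH.
rewrite -[in RHS]IH; ring.
Qed.

Lemma cheb_bound (R : realType) (z : R) j : -1 <= z <= 1 ->
  (cheb z (z ^+ 2 - 1) j).1 ^+ 2 <= 1.
Proof.
move=> /andP[h1 h2].
have := cheb_pell R z j; set t := (cheb _ _ j).1; set u := (cheb _ _ j).2 => H.
have : (z ^+ 2 - 1) * u ^+ 2 <= 0.
  apply: mulr_le0_ge0; last exact: sqr_ge0.
  nra.
lra.
Qed.

Lemma cheb_w (R : realType) (w : R) j : 0 < w ->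
  let z := (w + w^-1) / 2 in
  (cheb z (z ^+ 2 - 1) j).1 = (w ^+ j.+1 + w ^- j.+1) / 2 /\
  (w - w^-1) / 2 * (cheb z (z ^+ 2 - 1) j).2 = (w ^+ j.+1 - w ^- j.+1) / 2.
Proof.
move=> w0 z.
have wn : w != 0 by rewrite gt_eqF.
elim: j => [|j [IH1 IH2]] /=.
  by rewrite expr1 /z; split; [|rewrite mulr1].
move: IH1 IH2; set t := (cheb _ _ j).1; set u := (cheb _ _ j).2 => IH1 IH2.
have hz : z ^+ 2 - 1 = ((w - w^-1) / 2) ^+ 2 by rewrite /z; field.
have e1 : (z ^+ 2 - 1) * u = (w - w^-1) / 2 * ((w - w^-1) / 2 * u) by rewrite hz; ring.
have e2 : (w - w^-1) / 2 * (t + z * u) = (w - w^-1) / 2 * t + z * ((w - w^-1) / 2 * u) by ring.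
split.
  rewrite e1 IH2 IH1 /z !exprS !invfM; field; rewrite ?expf_neq0 ?wn// ?pnatr_eq0//.
rewrite e2 IH2 IH1 /z !exprS !invfM; field; rewrite ?expf_neq0 ?wn// ?pnatr_eq0//.
Qed.

Lemma cheb_lb (R : realType) (w : R) j : 0 < w ->
  w ^+ j.+1 / 2 <= (cheb ((w + w^-1) / 2) (((w + w^-1) / 2) ^+ 2 - 1) j).1.
Proof.
move=> w0; rewrite (cheb_w R w j w0).1 ler_pM2r// lerDl.
by rewrite invr_ge0 exprn_ge0// ltW.
Qed.

Section Exist.
Import -(notations) mpoly.

Lemma deg_le_msize (R : realType) p d (P : mpoly p R) : deg_le d P = (msize P <= d.+1)%N.
Proof. by rewrite /deg_le msizeE. Qed.

Lemma exists_poly (R : realType) p (S : set 'rV[R]_p) (x : 'rV[R]_p) (a b : R) (k : nat) :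
  0 <= a -> a < b ->
  (forall y, S y -> a ^+ 2 <= \sum_(i < p) (y ord0 i - x ord0 i) ^+ 2 <= b ^+ 2) ->
  exists P : mpoly p R, [/\ deg_le (2 * k) P, peval P x = 1 &
    forall y, S y -> (peval P y) ^+ 2 <= 4 * ((b - a) / (b + a)) ^+ (2 * k)].
Proof.
move=> a0 ab hS.
case: k => [|j].
  exists 1; split.
  - by rewrite deg_le_msize msize1.
  - by rewrite /peval meval1.
  - by move=> y _; rewrite /peval meval1 expr1n expr0 mulr1 ler1n.
have b0 : 0 < b by apply: le_lt_trans ab.
have bma : 0 < b - a by rewrite subr_gt0.
have bpa : 0 < b + a by rewrite ltr_wpDr.
pose w := (b + a) / (b - a).
have w0 : 0 < w by rewrite divr_gt0.
pose m := (a ^+ 2 + b ^+ 2) / 2.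
pose h := (b ^+ 2 - a ^+ 2) / 2.
have h0 : 0 < h.
  rewrite divr_gt0// subr_gt0; rewrite -ltr_sqrt ?exprn_gt0 ?sqrtr_sqr//.
  by rewrite !ger0_norm// ltW.
pose z0 := (w + w^-1) / 2.
pose Lm : mpoly p R := mpolyC p (m / h) - h^-1 *: Qpoly x.
pose L2m : mpoly p R := Lm ^+ 2 - 1.
pose c := (cheb z0 (z0 ^+ 2 - 1) j).1.
have cge : w ^+ j.+1 / 2 <= c := cheb_lb R w j w0.
have c0 : 0 < c by apply: lt_le_trans cge; rewrite divr_gt0// exprn_gt0.
exists (c^-1 *: (cheb Lm L2m j).1).
have evL (y : 'rV[R]_p) : meval (fun i => y ord0 i) Lm = m / h - h^-1 * \sum_(i < p) (y ord0 i - x ord0 i) ^+ 2.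
  by rewrite mevalB mevalC mevalZ meval_Q.
have evP (y : 'rV[R]_p) : peval (c^-1 *: (cheb Lm L2m j).1) y =
    c^-1 * (cheb (meval (fun i => y ord0 i) Lm) ((meval (fun i => y ord0 i) Lm) ^+ 2 - 1) j).1.
  rewrite /peval mevalZ (meval_cheb _ _ _ j).1; congr (_ * (cheb _ _ _).1).
  by rewrite mevalB meval1 rmorphXn.
split.
- have hl : (msize Lm <= 3)%N.
    apply: msizeB2; last by apply: (leq_trans (msizeZ_le _ _)); apply: msize_Q.
    by rewrite msizeC; case: (_ != 0).
  have hl2 : (msize L2m <= 5)%N.
    apply: msizeB2; last by rewrite msize1.
    by rewrite expr2; apply: (@msizeM2 _ _ _ _ 2 2).
  have [H _] := msize_cheb Lm L2m j hl hl2.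
  rewrite deg_le_msize; apply: (leq_trans (msizeZ_le _ _)).
  by apply: (leq_trans H); lia.
- rewrite evP evL.
  have -> : \sum_(i < p) (x ord0 i - x ord0 i) ^+ 2 = 0.
    by rewrite big1 // => i _; rewrite subrr expr0n.
  have -> : m / h - h^-1 * 0 = z0.
    rewrite mulr0 subr0 /m /h /z0 /w; field.
    have hb2 : 0 < b ^+ 2 - a ^+ 2 by move: h0; rewrite /h; lra.
    by rewrite (gt_eqF bma) (gt_eqF bpa) (gt_eqF hb2).
  by rewrite mulVf ?gt_eqF.
- move=> y Sy; rewrite evP evL.
  have /andP[e1 e2] := hS y Sy.
  move: e1 e2; set E := \sum_(i < p) _ => e1 e2.
  have -> : m / h - h^-1 * E = (m - E) / h by field; rewrite gt_eqF.
  set l := (m - E) / h.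
  have /andP[hl1 hl2] : -1 <= l <= 1.
    rewrite /l ler_pdivlMr// ler_pdivrMr//.
    by apply/andP; split; rewrite /m /h; lra.
  have Tb := cheb_bound R l j (introT andP (conj hl1 hl2)).
  set T := (cheb l _ j).1 in Tb *.
  have ci : c^-1 <= 2 * w^-1 ^+ j.+1.
    have wk : 0 < w ^+ j.+1 / 2 by rewrite divr_gt0 ?exprn_gt0.
    apply: le_trans (_ : (w ^+ j.+1 / 2)^-1 <= _).
      by rewrite lef_pV2 ?posrE.
    by rewrite invf_div exprVn mulrC.
  have ci0 : 0 <= c^-1 by rewrite invr_ge0 ltW.
  rewrite exprMn; apply: (le_trans (ler_wpM2l (exprn_ge0 _ ci0) Tb)).
  rewrite mulr1 (_ : (b - a) / (b + a) = w^-1); last by rewrite /w invf_div.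
  rewrite mulnC exprM (_ : 4 = 2 ^+ 2); last by rewrite expr2; lra.
  by rewrite -exprMn !expr2; apply: ler_pM.
Qed.

End Exist.

Section Geom.
Variable R : realType.

Lemma cs_ord n (u v : 'I_n -> R) :
  (\sum_i u i * v i) ^+ 2 <= (\sum_i u i ^+ 2) * (\sum_i v i ^+ 2).
Proof.
elim: (index_enum _) => [|i r IH]; first by rewrite !big_nil expr0n mulr0.
rewrite !big_cons.
set C := \sum_(j <- r) _ in IH *; set A := \sum_(j <- r) _ in IH *; set B := \sum_(j <- r) _ in IH *.
have A0 : 0 <= A by rewrite /A sumr_ge0// => j _; rewrite sqr_ge0.
have B0 : 0 <= B by rewrite /B sumr_ge0// => j _; rewrite sqr_ge0.
set a := u i; set b := v i.
have h1 : (2 * a * b * C) ^+ 2 <= (a ^+ 2 * B + A * b ^+ 2) ^+ 2.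
  have : 0 <= (a ^+ 2 * B - A * b ^+ 2) ^+ 2 by apply: sqr_ge0.
  have : 0 <= 4 * a ^+ 2 * b ^+ 2.
    apply: mulr_ge0; last exact: sqr_ge0.
    apply: mulr_ge0; last exact: sqr_ge0.
    lra.
  nra.
have h2 : 0 <= a ^+ 2 * B + A * b ^+ 2.
  by apply: addr_ge0; apply: mulr_ge0 => //; apply: sqr_ge0.
have h3 : 2 * a * b * C <= a ^+ 2 * B + A * b ^+ 2.
  apply: le_trans (ler_norm _) _.
  by rewrite -(@ler_pXn2r _ 2) ?nnegrE ?normr_ge0// real_normK ?num_real.
nra.
Qed.

Lemma tri_ord n (u v : 'I_n -> R) :
  Num.sqrt (\sum_i (u i + v i) ^+ 2) <= Num.sqrt (\sum_i u i ^+ 2) + Num.sqrt (\sum_i v i ^+ 2).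
Proof.
set U := \sum_i u i ^+ 2; set V := \sum_i v i ^+ 2; set C := \sum_i u i * v i.
have U0 : 0 <= U by rewrite /U sumr_ge0// => j _; rewrite sqr_ge0.
have V0 : 0 <= V by rewrite /V sumr_ge0// => j _; rewrite sqr_ge0.
have -> : \sum_i (u i + v i) ^+ 2 = U + 2 * C + V.
  rewrite /U /V /C mulr_sumr -!big_split /=; apply: eq_bigr => i _; ring.
have hC : C <= Num.sqrt U * Num.sqrt V.
  apply: le_trans (ler_norm _) _.
  rewrite -sqrtr_sqr -sqrtrM// ler_sqrt ?mulr_ge0//.
  exact: cs_ord.
have s0 : 0 <= Num.sqrt U + Num.sqrt V by apply: addr_ge0; apply: sqrtr_ge0.
rewrite -[X in _ <= X](ger0_norm s0) -sqrtr_sqr ler_sqrt; last exact: sqr_ge0.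
rewrite sqrrD !sqr_sqrtr//.
lra.
Qed.

Lemma eucl_tri p (x y z : 'rV[R]_p) : eucl_dist x z <= eucl_dist x y + eucl_dist y z.
Proof.
rewrite /eucl_dist.
have := @tri_ord p (fun i => x ord0 i - y ord0 i) (fun i => y ord0 i - z ord0 i).
congr (Num.sqrt _ <= _); apply: eq_bigr => i _; congr (_ ^+ 2); ring.
Qed.

Lemma eucl_sym p (x y : 'rV[R]_p) : eucl_dist x y = eucl_dist y x.
Proof.
rewrite /eucl_dist; congr Num.sqrt; apply: eq_bigr => i _.
by rewrite -sqrrN opprB.
Qed.

Lemma eucl_ge0 p (x y : 'rV[R]_p) : 0 <= eucl_dist x y.
Proof. exact: sqrtr_ge0. Qed.

Lemma eucl_sq p (x y : 'rV[R]_p) : eucl_dist x y ^+ 2 = \sum_(i < p) (y ord0 i - x ord0 i) ^+ 2.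
Proof.
rewrite eucl_sym /eucl_dist sqr_sqrtr//.
by rewrite sumr_ge0// => i _; rewrite sqr_ge0.
Qed.

End Geom.

Lemma final_ineq (R : realType) (r s t : R) (d : nat) : 0 <= r ->
  r <= expR (- (s * ln 2)) -> 0 <= s <= 1 -> t <= s * d%:R ->
  4 * r ^+ (2 * d./2) <= (2 : R) `^ (3 - t).
Proof.
move=> r0 hr /andP[s0 s1] ht.
set k := d./2.
have ln2 : 0 < ln (2 : R) by apply: ln_gt0; rewrite ltr1n.
have hK : d%:R <= (2 * k)%:R + 1 :> R.
  rewrite natr1 ler_nat.
  move: (odd_double_half d); rewrite -/k -muln2; case: (odd d) => /= h; lia.
set K := (2 * k)%:R : R in hK *.
have key : 2 - K * s <= 3 - t by nra.
have h1 : r ^+ (2 * k) <= expR (K * - (s * ln 2)).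
  rewrite expRM_natl; apply: lerXn2r => //; rewrite ?nnegrE ?expR_ge0//.
have h4 : 4 = expR (2 * ln 2) :> R.
  by rewrite -[2 * _]/(2%:R * _) expRM_natl lnK ?posrE// expr2; lra.
have hp : (2 : R) `^ (3 - t) = expR ((3 - t) * ln 2).
  by rewrite /powR (negbTE (_ : (2 : R) != 0)) // pnatr_eq0.
rewrite hp h4; apply: le_trans (ler_wpM2l (expR_ge0 _) h1) _.
rewrite -expRD ler_expR.
have : (2 - K * s) * ln 2 <= (3 - t) * ln 2 by rewrite ler_pM2r.
lra.
Qed.

Lemma rv_coord_le (R : realType) p (y : 'rV[R]_p) i : `|y ord0 i| <= `|y|.
Proof.
rewrite (_ : `|y| = mx_norm y) // mx_normrE.
exact: (le_bigmax 0 (fun ij : 'I_1 * 'I_p => `|y ij.1 ij.2|) (ord0, i)).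
Qed.

Lemma diam_ub (R : realType) p (S : set 'rV[R]_p) : compact S ->
  has_ubound [set eucl_dist u v | u in S & v in S].
Proof.
move=> cS.
have [M0 [_ HM]] := compact_bounded cS.
have HM1 := HM (M0 + 1) (_ : M0 < M0 + 1).
have {HM1}HM1 := HM1 ltac:(by rewrite ltrDl).
exists (Num.sqrt (\sum_(i < p) (2 * (M0 + 1)) ^+ 2)) => _ [u Su [v Sv <-]].
rewrite /eucl_dist ler_sqrt; last by rewrite sumr_ge0// => i _; apply: sqr_ge0.
apply: ler_sum => i _.
have hu := le_trans (@rv_coord_le _ _ u i) (HM1 u Su).
have hv := le_trans (@rv_coord_le _ _ v i) (HM1 v Sv).
move: hu hv; rewrite !ler_norml => /andP[u1 u2] /andP[v1 v2].
nra.
Qed.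

Lemma ln2_le1 (R : realType) : ln (2 : R) <= 1.
Proof.
rewrite -[X in _ <= X](@expRK R 1) ler_ln ?posrE ?expR_gt0//.
by apply: le_trans (expR_ge1Dx 1); lra.
Qed.

Theorem lemma6p6 (R : realType) (p : nat) (S : set 'rV[R]_p) (x : 'rV[R]_p)
  (delta : R) (d : nat) :
  compact S -> closure (interior S) = S -> S !=set0 ->
  ~ S x -> 0 <= delta -> delta <= dist_set x S -> (0 < d)%N ->
  ((sdim p d)%:R%:E * christoffel_unif S d x <=
   ((2 : R) `^ (3 - delta * d%:R / (delta + diam S)) * d%:R ^+ p
      * (expR 1 / p%:R) ^+ p * expR (p%:R ^+ 2 / d%:R))%:E)%E.
Proof.
move=> cS _ hne _ d0 dd dpos.
set a := dist_set x S.
set D := diam S.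
set t := delta * d%:R / (delta + D).
have hA : has_lbound [set eucl_dist x y | y in S].
  by exists 0 => _ [y _ <-]; apply: eucl_ge0.
have hAne : [set eucl_dist x y | y in S] !=set0.
  by case: hne => y Sy; exists (eucl_dist x y), y.
have a0 : 0 <= a by apply: lb_le_inf => // _ [y _ <-]; apply: eucl_ge0.
have aS : forall y, S y -> a <= eucl_dist x y.
  by move=> y Sy; apply: ge_inf => //; exists y.
have hB := @diam_ub _ _ _ cS.
have DS : forall u v, S u -> S v -> eucl_dist u v <= D.
  by move=> u v Su Sv; apply: ub_le_sup => //; exists u => //; exists v.
have D0 : 0 <= D by case: hne => y Sy; apply: le_trans (DS y y Sy Sy); apply: eucl_ge0.
have bS : forall y, S y -> eucl_dist x y <= a + D.
  move=> y Sy; apply/ler_addgt0Pr => e e0.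
  have [_ [z Sz <-] hz] := inf_adherent e0 (conj hAne hA).
  apply: le_trans (@eucl_tri _ _ x z y) _.
  have := DS z y Sz Sy; rewrite -/a in hz; lra.
have gen : forall (a' b s : R), 0 <= a' -> a' < b ->
    (forall y, S y -> a' <= eucl_dist x y <= b) -> 0 <= s <= 1 -> t <= s * d%:R ->
    (b - a') / (b + a') <= expR (- (s * ln 2)) ->
    exists P : mpoly.mpoly p R, [/\ deg_le d P, peval P x = 1 &
      forall y, S y -> peval P y ^+ 2 <= (2 : R) `^ (3 - t)].
  move=> a' b s a'0 a'b hab hs ht hr.
  have hS : forall y, S y -> a' ^+ 2 <= \sum_(i < p) (y ord0 i - x ord0 i) ^+ 2 <= b ^+ 2.
    move=> y Sy; have /andP[h1 h2] := hab y Sy.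
    have b0 : 0 <= b by apply: le_trans (ltW a'b).
    have e0 := @eucl_ge0 _ _ x y.
    rewrite -eucl_sq; apply/andP; split; apply: lerXn2r; rewrite ?nnegrE//.
  have [P [h1 h2 h3]] := @exists_poly _ _ _ _ _ _ (d./2) a'0 a'b hS.
  exists P; split => //.
    rewrite /deg_le in h1 *; apply: (leq_trans h1).
    by rewrite ltnS -{2}(odd_double_half d) -muln2 mulnC leq_addl.
  move=> y Sy; apply: le_trans (h3 y Sy) _.
  apply: (@final_ineq R _ s t d _ hr hs ht).
  by apply: divr_ge0; lra.
have ln2 : 0 < ln (2 : R) by apply: ln_gt0; rewrite ltr1n.
have [P0 [hdeg hPx hPy]] : exists P : mpoly.mpoly p R, [/\ deg_le d P, peval P x = 1 &
      forall y, S y -> peval P y ^+ 2 <= (2 : R) `^ (3 - t)].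
  have [DZ|Dpos] := eqVneq D 0.
    have [dZ|dpos'] := eqVneq delta 0.
      apply: (gen a (a + 1) 0) => //.
      - by lra.
      - move=> y Sy; rewrite aS //=; apply: le_trans (bS y Sy) _; rewrite DZ; lra.
      - by rewrite lexx ler01.
      - by rewrite /t dZ !mul0r.
      - rewrite mul0r oppr0 expR0 ler_pdivrMr; last by lra.
        lra.
    have dp : 0 < delta by rewrite lt_def dpos' d0.
    have ap : 0 < a by apply: lt_le_trans dd.
    apply: (gen a (2 * a) 1) => //.
    - by lra.
    - move=> y Sy; rewrite aS //=; apply: le_trans (bS y Sy) _; rewrite DZ; lra.
    - by rewrite lexx ler01.
    - by rewrite /t DZ addr0 mul1r mulrAC divff ?mul1r // (gt_eqF dp).
    - rewrite mul1r expRN lnK ?posrE //.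
      have -> : (2 * a - a) / (2 * a + a) = 3^-1.
        have -> : 2 * a - a = a by ring.
        have -> : 2 * a + a = 3 * a by ring.
        by rewrite invfM mulrCA divff ?mulr1 // gt_eqF.
      by rewrite lef_pV2 ?posrE // ler_nat.
  have Dp : 0 < D by rewrite lt_def Dpos D0.
  apply: (gen a (a + D) (a / (a + D))) => //.
  - by lra.
  - by move=> y Sy; rewrite aS // bS.
  - rewrite divr_ge0 ?addr_ge0 //= ler_pdivrMr ?mul1r; lra.
  - rewrite /t mulrAC; apply: ler_wpM2r => //.
    have hk : delta * D <= a * D by rewrite ler_pM2r.
    rewrite ler_pdivrMr; last by lra.
    rewrite mulrAC ler_pdivlMr; last by lra.
    lra.
  - apply: le_trans (expR_ge1Dx _).
    have h1 : 0 <= a / (a + D) by rewrite divr_ge0 ?addr_ge0.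
    have h2 : a / (a + D) * ln 2 <= a / (a + D) by rewrite ler_piMr // ln2_le1.
    have -> : a + D - a = D by ring.
    have h3 : D / (a + D + a) <= 1 - a / (a + D).
      have -> : 1 - a / (a + D) = D / (a + D).
        by rewrite -[1](@divff _ (a + D)) ?gt_eqF ?ltr_wpDl // -mulrBl; congr (_ / _); ring.
      apply: ler_wpM2l; first exact: ltW.
      rewrite lef_pV2 ?posrE; lra.
    lra.
have hL : (christoffel_unif S d x <= ((2 : R) `^ (3 - t))%:E)%E.
  apply: le_trans (@int_sq_bound _ _ _ _ _ (powR_ge0 _ _) hPy).
  by apply: ereal_inf_lbound; exists P0.
apply: le_trans (lee_wpmul2l _ hL) _; first by rewrite lee_fin ler0n.
rewrite -EFinM lee_fin -/t.
set c := (2 : R) `^ (3 - t).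
pose B : R := d%:R ^+ p * (expR 1 / p%:R) ^+ p * expR (p%:R ^+ 2 / d%:R).
have hc : 0 <= c by apply: powR_ge0.
have hSB : (sdim p d)%:R <= B by apply: sdim_bound.
rewrite (_ : c * _ * _ * _ = c * B); last by rewrite /B !mulrA.
by rewrite mulrC; apply: ler_wpM2l.
Qed.
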